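(* Let $G$ be a Lie group with Lie algebra $\mathfrak{g}$ and left-invariant metric given by an inner product $\langle\cdot,\cdot\rangle$ on $\mathfrak{g}$. Let $\mathfrak{n}$ be the nilradical of $\mathfrak{g}$ and $\mathfrak{r}$ its orthogonal complement, and assume $[\mathfrak{r},\mathfrak{r}]\subset\mathfrak{r}$. Let $\{r_i\}$ be an orthonormal basis of $\mathfrak{r}$. Then for all $A,B\in\mathfrak{r}$ and $Z,W\in\mathfrak{n}$: $$\langle \mathrm{M}Z,W\rangle=\langle\mathrm{M}_\mathfrak{n}Z,W\rangle+\tfrac12\sum_i\langle[\operatorname{ad}_{r_i}|_\mathfrak{n},\operatorname{ad}_{r_i}^t|_\mathfrak{n}]Z,W\rangle,$$ $$\langle\mathrm{M}A,B\rangle=\langle\mathrm{M}_\mathfrak{r}A,B\rangle-\tfrac12\operatorname{tr}(\operatorname{ad}_A|_\mathfrak{n}\operatorname{ad}_B^t|_\mathfrak{n}),$$ $$\langle\mathrm{M}A,W\rangle=-\tfrac12\operatorname{tr}(\operatorname{ad}_A|_\mathfrak{n}\operatorname{ad}_W^t|_\mathfrak{n}).$$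
   Context: For a Lie algebra $(\mathfrak{g},\mu)$ with inner product $\langle\cdot,\cdot\rangle$ and orthonormal basis $\{X_k\}$, the symmetric tensor $\mathrm{M}$ is $\mathrm{M}(X,Y)=-\tfrac12\sum_k\langle\mu(X,X_k),\mu(Y,X_k)\rangle+\tfrac14\sum_{k,j}\langle\mu(X_k,X_j),X\rangle\langle\mu(X_k,X_j),Y\rangle$, identified with the endomorphism $\mathrm{M}$ via $\langle\mathrm{M}X,Y\rangle=\mathrm{M}(X,Y)$. $\mathrm{M}_\mathfrak{n}$ (resp. $\mathrm{M}_\mathfrak{r}$) is the analogous endomorphism of $\mathfrak{n}$ (resp. $\mathfrak{r}$) with the restricted bracket and inner product. Transposes $^t$ are with respect to $\langle\cdot,\cdot\rangle$. *)

(* Defs.v *)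
(* A finite-dimensional real Lie algebra with inner product is
   modelled (after choosing an orthonormal basis) as 'rV[R]_n with the standard
   dot product and a Lie bracket mu. *)
From HB Require Import structures.
From mathcomp Require Import all_boot all_order all_algebra.
From mathcomp Require Import reals.
Set Implicit Arguments. Unset Strict Implicit. Unset Printing Implicit Defensive.
Import Order.TTheory GRing.Theory Num.Theory.
Local Open Scope ring_scope.

Section Defs.
Variables (R : realType) (n : nat).
Notation V := 'rV[R]_n.

Definition dot (u v : V) : R := (u *m v^T) 0 0.

Definition stdb (k : 'I_n) : V := delta_mx 0 k.

Definition lie_bracket (mu : V -> V -> V) : Prop :=
  [/\ (forall (a : R) x y z, mu (a *: x + y) z = a *: mu x z + mu y z),
      (forall (a : R) x y z, mu z (a *: x + y) = a *: mu z x + mu z y),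
      (forall x, mu x x = 0) &
      (forall x y z, mu x (mu y z) + mu y (mu z x) + mu z (mu x y) = 0)].

(* subspaces are row spaces of square matrices *)
Definition inS (S : 'M[R]_n) (v : V) : Prop := (v <= S)%MS.

Definition is_ideal (mu : V -> V -> V) (S : 'M[R]_n) : Prop :=
  forall x v, inS S v -> inS S (mu x v).

Definition itbr (mu : V -> V -> V) (xs : seq V) (y : V) : V :=
  foldr (fun x acc => mu x acc) y xs.

(* the ideal S is nilpotent as a Lie algebra: S^{k+1} = 0 for some k, where
   S^1 = S, S^{j+1} = [S, S^j] (spanned by the iterated brackets below) *)
Definition is_nilpotent_ideal (mu : V -> V -> V) (S : 'M[R]_n) : Prop :=
  exists k : nat, forall (xs : seq V) (y : V),
    size xs = k -> (forall x, x \in xs -> inS S x) -> inS S y ->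
    itbr mu xs y = 0.

Definition is_nilradical (mu : V -> V -> V) (N : 'M[R]_n) : Prop :=
  [/\ is_ideal mu N, is_nilpotent_ideal mu N &
      forall S : 'M[R]_n, is_ideal mu S -> is_nilpotent_ideal mu S ->
        (S <= N)%MS].

Definition orthc (N : 'M[R]_n) (v : V) : Prop :=
  forall w, inS N w -> dot v w = 0.

Definition onb_of (P : V -> Prop) (p : nat) (e : 'I_p -> V) : Prop :=
  [/\ (forall i j, dot (e i) (e j) = (i == j)%:R),
      (forall i, P (e i)) &
      (forall v, P v -> exists c : 'I_p -> R, v = \sum_i c i *: e i)].

(* the symmetric form M(X,Y), computed with the orthonormal basis b of the
   (sub)algebra on which mu is restricted *)
Definition Mform (mu : V -> V -> V) (p : nat) (b : 'I_p -> V) (X Y : V) : R :=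
  - (1/2) * (\sum_k dot (mu X (b k)) (mu Y (b k)))
  + (1/4) * (\sum_k \sum_j dot (mu (b k) (b j)) X * dot (mu (b k) (b j)) Y).

(* transpose of ad_x on g w.r.t. the inner product *)
Definition adT (mu : V -> V -> V) (x v : V) : V :=
  \sum_k dot v (mu x (stdb k)) *: stdb k.

Definition proj (p : nat) (e : 'I_p -> V) (v : V) : V :=
  \sum_j dot v (e j) *: e j.

(* (ad_x|_n)^t : transpose of the restriction of ad_x to n, an operator on n *)
Definition adTn (mu : V -> V -> V) (p : nat) (e : 'I_p -> V) (x v : V) : V :=
  proj e (adT mu x v).

Definition trn (p : nat) (e : 'I_p -> V) (T : V -> V) : R :=
  \sum_j dot (T (e j)) (e j).

End Defs.

(* Main.v *)
Require Import Defs.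
From HB Require Import structures.
From mathcomp Require Import all_boot all_order all_algebra.
From mathcomp Require Import reals ring lra.
Import Order.TTheory GRing.Theory Num.Theory.
Local Open Scope ring_scope.
Set Implicit Arguments. Unset Strict Implicit.

Section Helpers.
Variables (R : realType) (n : nat).
Notation V := 'rV[R]_n.

Lemma dotE (u v : V) : dot u v = \sum_k u 0 k * v 0 k.
Proof. by rewrite /dot !mxE; apply: eq_bigr => k _; rewrite mxE. Qed.

Lemma dotC (u v : V) : dot u v = dot v u.
Proof. by rewrite !dotE; apply: eq_bigr => k _; rewrite mulrC. Qed.

Lemma dotDl (a : R) (x y z : V) : dot (a *: x + y) z = a * dot x z + dot y z.
Proof.
rewrite !dotE mulr_sumr -big_split; apply: eq_bigr => k _ /=; rewrite !mxE; ring.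
Qed.

Lemma dotDr (a : R) (x y z : V) : dot z (a *: x + y) = a * dot z x + dot z y.
Proof. by rewrite dotC dotDl !(dotC z). Qed.

Definition linf (L : V -> R) := forall (a : R) x y, L (a *: x + y) = a * L x + L y.

Lemma linf0 L : linf L -> L 0 = 0.
Proof. move=> HL; have := HL 1 0 0; rewrite scale1r addr0 mul1r; lra. Qed.

Lemma lin_sum L m (c : 'I_m -> R) (x : 'I_m -> V) : linf L ->
  L (\sum_i c i *: x i) = \sum_i c i * L (x i).
Proof.
move=> HL; apply: (big_rec2 (fun y1 y2 => L y1 = y2)); first exact: linf0.
by move=> i y1 y2 _ <-; rewrite HL.
Qed.

Lemma sum_delta m (c : 'I_m -> R) (i : 'I_m) :
  \sum_k c k * (k == i)%:R = c i.
Proof.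
rewrite (bigD1 i) //= big1 ?addr0 ?eqxx ?mulr1 //.
by move=> k /negbTE ->; rewrite mulr0.
Qed.

Lemma onb_expand (P : V -> Prop) m (e : 'I_m -> V) y :
  onb_of P e -> P y -> y = \sum_j dot y (e j) *: e j.
Proof.
case=> Ho _ Hc Py; have [c Hy] := Hc _ Py.
rewrite {1}Hy; apply: eq_bigr => i _; congr (_ *: _).
rewrite Hy (lin_sum (L:=fun u => dot u (e i))); last by move=> a u v; rewrite dotDl.
by under eq_bigr do rewrite Ho; rewrite sum_delta.
Qed.

Lemma onb_lin (P : V -> Prop) m (e : 'I_m -> V) y L :
  onb_of P e -> P y -> linf L -> L y = \sum_j dot y (e j) * L (e j).
Proof. by move=> He Py HL; rewrite {1}(onb_expand He Py) (lin_sum (L:=L)). Qed.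

Lemma stdb_onb : onb_of (fun _ : V => True) (@stdb R n).
Proof.
split=> //.
  move=> i j; rewrite dotE /stdb.
  under eq_bigr do rewrite !mxE /=.
  by rewrite (sum_delta (fun k => (k == i)%:R)) eq_sym.
move=> v _; exists (fun k => v 0 k); exact: row_sum_delta.
Qed.

Definition bilin (b : V -> V -> R) :=
  (forall z, linf (b ^~ z)) /\ (forall z, linf (b z)).

Lemma basis_change m (g : 'I_m -> V) b : onb_of (fun _ => True) g -> bilin b ->
  \sum_k b (@stdb R n k) (@stdb R n k) = \sum_a b (g a) (g a).
Proof.
move=> Hg [Hl Hr].
transitivity (\sum_a \sum_k dot (g a) (@stdb R n k) * b (@stdb R n k) (g a)); last first.
  apply: eq_bigr => a _.
  by rewrite [RHS](onb_lin (y := g a) (L := fun u => b u (g a)) stdb_onb).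
rewrite exchange_big /=; apply: eq_bigr => k _.
rewrite {1}(onb_lin (y := @stdb R n k) (L := b (@stdb R n k)) Hg) //; apply: eq_bigr => a _.
by rewrite dotC.
Qed.

End Helpers.

Section Main.
Variables (R : realType) (n p q : nat).
Notation V := 'rV[R]_n.
Variables (mu : V -> V -> V) (N : 'M[R]_n) (e : 'I_p -> V) (f : 'I_q -> V).
Hypotheses (Hmu : lie_bracket mu) (Hid : is_ideal mu N)
  (He : onb_of (inS N) e) (Hf : onb_of (orthc N) f)
  (Hr : forall a b, orthc N a -> orthc N b -> orthc N (mu a b)).

Lemma muLl a x y z : mu (a *: x + y) z = a *: mu x z + mu y z.
Proof. by case: Hmu. Qed.
Lemma muLr a x y z : mu z (a *: x + y) = a *: mu z x + mu z y.
Proof. by case: Hmu. Qed.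

Lemma muD x y z : mu (x + y) z = mu x z + mu y z.
Proof. by have := muLl 1 x y z; rewrite !scale1r. Qed.
Lemma muDr x y z : mu z (x + y) = mu z x + mu z y.
Proof. by have := muLr 1 x y z; rewrite !scale1r. Qed.

Lemma mu_anti x y : mu x y = - mu y x.
Proof.
case: Hmu => _ _ H0 _.
have := H0 (x + y); rewrite muD !muDr !H0 add0r addr0 => /eqP.
by rewrite addr_eq0 => /eqP.
Qed.

Lemma dotNl (x y : V) : dot (- x) y = - dot x y.
Proof.
have := dotDl (-1) x 0 y; rewrite addr0 scaleN1r => ->.
rewrite (linf0 (L := fun u => dot u y)); first by rewrite addr0 mulN1r.
by move=> a u v; rewrite dotDl.
Qed.
Lemma dotNr (x y : V) : dot y (- x) = - dot y x.
Proof. by rewrite dotC dotNl dotC. Qed.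

Lemma dotBl (x y z : V) : dot (x - y) z = dot x z - dot y z.
Proof. by have := dotDl 1 x (-y) z; rewrite scale1r mul1r dotNl. Qed.

Lemma inN_r x v : inS N v -> inS N (mu x v).
Proof. exact: Hid. Qed.
Lemma inN_l x v : inS N v -> inS N (mu v x).
Proof. move=> Hv; rewrite mu_anti -scaleN1r; apply: scalemx_sub; exact: Hid. Qed.

Lemma orth1 x a : inS N x -> orthc N a -> dot a x = 0.
Proof. by move=> Hx Ha; apply: Ha. Qed.
Lemma orth2 x a : inS N x -> orthc N a -> dot x a = 0.
Proof. by move=> Hx Ha; rewrite dotC; apply: Ha. Qed.

Lemma e_in i : inS N (e i). Proof. by case: He. Qed.
Lemma f_in j : orthc N (f j). Proof. by case: Hf. Qed.

Definition h (k : 'I_(p + q)) : V :=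
  match split k with inl i => e i | inr j => f j end.

Lemma split_l (i : 'I_p) : split (lshift q i) = inl i.
Proof. exact: (unsplitK (inl _ i)). Qed.
Lemma split_r (j : 'I_q) : split (rshift p j) = inr j.
Proof. exact: (unsplitK (inr _ j)). Qed.

Lemma sum_h (F : V -> R) : \sum_k F (h k) = \sum_i F (e i) + \sum_j F (f j).
Proof. by rewrite big_split_ord /h; congr (_ + _); apply: eq_bigr => i _; rewrite ?split_l ?split_r. Qed.

Lemma h_onb : onb_of (fun _ => True) h.
Proof.
case: He => Heo Hein Hec; case: Hf => Hfo Hfin Hfc.
split=> //.
  move=> i j; rewrite /h -{2}(splitK i) -{2}(splitK j).
  rewrite (inj_eq (can_inj unsplitK)).
  case: (split i) => a; case: (split j) => b //=.
  - by rewrite dotC orth1.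
  - by rewrite orth1.
move=> v _.
pose w := v - \sum_i dot v (e i) *: e i.
have Hw : orthc N w.
  move=> z Hz; rewrite (onb_lin (L := dot w) He Hz); last by move=> a x y; rewrite dotDr.
  apply: big1 => j _; suff -> : dot w (e j) = 0 by rewrite mulr0.
  rewrite /w dotBl (lin_sum (L:=fun u => dot u (e j))); last by move=> a x y; rewrite dotDl.
  by under eq_bigr do rewrite Heo; rewrite sum_delta subrr.
have [c Hc] := Hfc w Hw.
exists (fun k => match split k with inl i => dot v (e i) | inr j => c j end).
transitivity (\sum_i dot v (e i) *: e i + w); first by rewrite /w addrC subrK.
rewrite Hc big_split_ord /=; congr (_ + _); apply: eq_bigr => i _;
  by rewrite /h ?split_l ?split_r.
Qed.


Ltac lin_tac := let a := fresh in let x := fresh in let y := fresh in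
  move=> a x y /=; rewrite ?muLl ?muLr ?dotDl ?dotDr; ring.

Lemma adT_prop x v w : dot (adT mu x v) w = dot v (mu x w).
Proof.
rewrite /adT (lin_sum (L := fun u => dot u w)); last by lin_tac.
rewrite [RHS](onb_lin (y := w) (L := fun u => dot v (mu x u)) (stdb_onb R n)) //; last by lin_tac.
by apply: eq_bigr => k _; rewrite mulrC dotC.
Qed.

Lemma linf_mud x w : linf (fun u => dot (mu x u) w).
Proof. by lin_tac. Qed.

Lemma trn_lem A W : trn e (fun v => mu A (adTn mu e W v)) =
  \sum_i dot (mu W (e i)) (mu A (e i)).
Proof.
rewrite /trn /adTn /proj.
under eq_bigr => j _ do rewrite (lin_sum _ _ (linf_mud A (e j))).
rewrite exchange_big /=; apply: eq_bigr => i _.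
rewrite [RHS](onb_lin (y := mu A (e i)) (L := dot (mu W (e i))) He); last by lin_tac.
  by apply: eq_bigr => j _; rewrite adT_prop mulrC [dot (e j) _]dotC.
exact/inN_r/e_in.
Qed.

Lemma ext1 fj Z W : inS N W ->
  dot (mu fj (adTn mu e fj Z) - adTn mu e fj (mu fj Z)) W =
  \sum_a dot (mu fj (e a)) Z * dot (mu fj (e a)) W - dot (mu fj Z) (mu fj W).
Proof.
move=> HW; rewrite dotBl /adTn /proj (lin_sum _ _ (linf_mud fj W)).
rewrite (lin_sum (L := fun u => dot u W)); last by lin_tac.
congr (_ - _); first by apply: eq_bigr => a _; rewrite adT_prop dotC.
rewrite [RHS](onb_lin (y := W) (L := fun u => dot (mu fj Z) (mu fj u)) He) //; last by lin_tac.
by apply: eq_bigr => a _; rewrite adT_prop mulrC dotC.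
Qed.

Lemma bil1 X Y : bilin (fun u v => dot (mu X u) (mu Y v)).
Proof. by split=> z; lin_tac. Qed.
Lemma bil2 x X Y : bilin (fun u v => dot (mu x u) X * dot (mu x v) Y).
Proof. by split=> z; lin_tac. Qed.
Lemma bil3 x X Y : bilin (fun u v => dot (mu u x) X * dot (mu v x) Y).
Proof. by split=> z; lin_tac. Qed.

Lemma T1h X Y : \sum_k dot (mu X (@stdb R n k)) (mu Y (@stdb R n k)) =
  \sum_i dot (mu X (e i)) (mu Y (e i)) + \sum_j dot (mu X (f j)) (mu Y (f j)).
Proof. by rewrite (basis_change h_onb (bil1 X Y)) (sum_h (fun u => dot (mu X u) (mu Y u))). Qed.

Lemma T2h X Y :
  let G := fun u v => dot (mu u v) X * dot (mu u v) Y in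
  \sum_k \sum_j dot (mu (@stdb R n k) (@stdb R n j)) X * dot (mu (@stdb R n k) (@stdb R n j)) Y =
  (\sum_a \sum_b G (e a) (e b) + \sum_a \sum_b G (e a) (f b)) +
  (\sum_a \sum_b G (f a) (e b) + \sum_a \sum_b G (f a) (f b)).
Proof.
move=> G.
under eq_bigr => k _ do rewrite (basis_change h_onb (bil2 (@stdb R n k) X Y)).
rewrite exchange_big /=.
under eq_bigr => b _ do rewrite (basis_change h_onb (bil3 (h b) X Y)).
rewrite exchange_big /=.
rewrite (sum_h (fun u => \sum_b G u (h b))).
by congr (_ + _); rewrite -big_split /=; apply: eq_bigr => a _;
  rewrite (sum_h (G _)).
Qed.

Lemma main_sec :
  [/\ (forall Z W, inS N Z -> inS N W ->
         Mform mu (@stdb R n) Z W =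
         Mform mu e Z W
         + (1/2) * \sum_i dot (mu (f i) (adTn mu e (f i) Z)
                               - adTn mu e (f i) (mu (f i) Z)) W),
      (forall A B, orthc N A -> orthc N B ->
         Mform mu (@stdb R n) A B =
         Mform mu f A B
         - (1/2) * trn e (fun v => mu A (adTn mu e B v))) &
      (forall A W, orthc N A -> inS N W ->
         Mform mu (@stdb R n) A W =
         - (1/2) * trn e (fun v => mu A (adTn mu e W v)))].
Proof.
have eN := e_in; have fO := f_in.
split.
- move=> Z W HZ HW; rewrite /Mform T1h T2h /=.
  under [X in _ = _ + _ * X]eq_bigr => j _ do rewrite ext1 //.
  rewrite sumrB.
  have -> : \sum_a \sum_b dot (mu (f a) (f b)) Z * dot (mu (f a) (f b)) W = 0.
    by apply: big1 => a _; apply: big1 => b _; rewrite orth1 ?mul0r //; apply: Hr.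
  have -> : \sum_j dot (mu Z (f j)) (mu W (f j)) = \sum_j dot (mu (f j) Z) (mu (f j) W).
    by apply: eq_bigr => j _; rewrite (mu_anti Z) (mu_anti W) dotNl dotNr opprK.
  have -> : \sum_a \sum_b dot (mu (e a) (f b)) Z * dot (mu (e a) (f b)) W =
            \sum_a \sum_b dot (mu (f a) (e b)) Z * dot (mu (f a) (e b)) W.
    rewrite exchange_big /=; apply: eq_bigr => a _; apply: eq_bigr => b _.
    by rewrite mu_anti dotNl dotNl mulrNN.
  lra.
- move=> A B HA HB; rewrite /Mform T1h T2h trn_lem /=.
  have -> : \sum_a \sum_b dot (mu (e a) (e b)) A * dot (mu (e a) (e b)) B = 0.
    by apply: big1 => a _; apply: big1 => b _; rewrite orth2 ?mul0r //; apply: inN_r.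
  have -> : \sum_a \sum_b dot (mu (e a) (f b)) A * dot (mu (e a) (f b)) B = 0.
    by apply: big1 => a _; apply: big1 => b _; rewrite orth2 ?mul0r //; apply: inN_l.
  have -> : \sum_a \sum_b dot (mu (f a) (e b)) A * dot (mu (f a) (e b)) B = 0.
    by apply: big1 => a _; apply: big1 => b _; rewrite orth2 ?mul0r //; apply: inN_r.
  have -> : \sum_i dot (mu B (e i)) (mu A (e i)) = \sum_i dot (mu A (e i)) (mu B (e i)).
    by apply: eq_bigr => i _; rewrite dotC.
  lra.
- move=> A W HA HW; rewrite /Mform T1h T2h trn_lem /=.
  have -> : \sum_a \sum_b dot (mu (e a) (e b)) A * dot (mu (e a) (e b)) W = 0.
    by apply: big1 => a _; apply: big1 => b _; rewrite orth2 ?mul0r //; apply: inN_r.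
  have -> : \sum_a \sum_b dot (mu (e a) (f b)) A * dot (mu (e a) (f b)) W = 0.
    by apply: big1 => a _; apply: big1 => b _; rewrite orth2 ?mul0r //; apply: inN_l.
  have -> : \sum_a \sum_b dot (mu (f a) (e b)) A * dot (mu (f a) (e b)) W = 0.
    by apply: big1 => a _; apply: big1 => b _; rewrite orth2 ?mul0r //; apply: inN_r.
  have -> : \sum_a \sum_b dot (mu (f a) (f b)) A * dot (mu (f a) (f b)) W = 0.
    by apply: big1 => a _; apply: big1 => b _; rewrite (orth1 (x := W)) ?mulr0 //; apply: Hr.
  have -> : \sum_j dot (mu A (f j)) (mu W (f j)) = 0.
    by apply: big1 => j _; rewrite orth1 //; [apply: inN_l | apply: Hr].
  have -> : \sum_i dot (mu W (e i)) (mu A (e i)) = \sum_i dot (mu A (e i)) (mu W (e i)).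
    by apply: eq_bigr => i _; rewrite dotC.
  lra.
Qed.

End Main.

Unset Implicit Arguments.
Theorem lemma3p2 (R : realType) (n p q : nat)
  (mu : 'rV[R]_n -> 'rV[R]_n -> 'rV[R]_n) (N : 'M[R]_n)
  (e : 'I_p -> 'rV[R]_n) (f : 'I_q -> 'rV[R]_n) :
  lie_bracket mu ->
  is_nilradical mu N ->
  onb_of (inS N) e ->
  onb_of (orthc N) f ->
  (forall a b, orthc N a -> orthc N b -> orthc N (mu a b)) ->
  [/\ (forall Z W, inS N Z -> inS N W ->
         Mform mu (@stdb R n) Z W =
         Mform mu e Z W
         + (1/2) * \sum_i dot (mu (f i) (adTn mu e (f i) Z)
                               - adTn mu e (f i) (mu (f i) Z)) W),
      (forall A B, orthc N A -> orthc N B ->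
         Mform mu (@stdb R n) A B =
         Mform mu f A B
         - (1/2) * trn e (fun v => mu A (adTn mu e B v))) &
      (forall A W, orthc N A -> inS N W ->
         Mform mu (@stdb R n) A W =
         - (1/2) * trn e (fun v => mu A (adTn mu e W v)))].
Proof.
move=> Hmu [Hid _ _] He Hf Hr.
exact: main_sec.
Qed.
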